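(* Let $\mathcal{G}(t)$ be a matrix-weighted switching network satisfying Assumption 1 (described in the context), and let $L^k$ denote its matrix-valued Laplacian on $[t_k,t_{k+1})$. For integers $0\le k'<k''$, let $\widetilde{L}_{[t_{k'},t_{k''})}=\frac{1}{t_{k''}-t_{k'}}\int_{t_{k'}}^{t_{k''}}L(t)\,dt$ be the matrix-valued Laplacian of the integral network over $[t_{k'},t_{k''})$. Then $$\mathrm{null}(\widetilde{L}_{[t_{k'},t_{k''})})=\bigcap_{i=1}^{k''-k'}\mathrm{null}(L^{k'+i-1}).$$
   Context: A matrix-weighted switching network $\mathcal{G}(t)=(\mathcal{V},\mathcal{E}(t),A(t))$ has node set $\mathcal{V}=\{1,\dots,n\}$, $n>1$; each edge $(i,j)\in\mathcal{E}(t)$ carries a symmetric weight $A_{ij}(t)\in\mathbb{R}^{d\times d}$ which is either positive (semi-)definite or negative (semi-)definite, with $A_{ij}=A_{ji}$, $A_{ii}=0$, $A_{ij}(t)=0$ if $(i,j)\notin\mathcal{E}(t)$; standing assumption: for each pair $(i,j)$ the weight $A_{ij}(t)$ has the same sign type (PSD for all $t$, or NSD for all $t$). Set $|A_{ij}|=A_{ij}$ if $A_{ij}\succeq0$ and $-A_{ij}$ if $A_{ij}\preceq0$. With $A=[A_{ij}]\in\mathbb{R}^{dn\times dn}$ and $D=\mathrm{diag}(D_1,\dots,D_n)$, $D_i=\sum_{j:(i,j)\in\mathcal{E}}|A_{ij}|$, the matrix-valued Laplacian is $L=D-A$. Assumption 1: there is a sequence $\{t_k\}_{k\in\mathbb{N}}$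 with $t_0=0$, $t_k\to\infty$, $t_{k+1}-t_k\ge\alpha>0$, and $\mathcal{G}(t)$ is constant on each $[t_k,t_{k+1})$. The integral network over $[t_1,t_2)$ has weights $\widetilde{A}=\frac{1}{t_2-t_1}\int_{t_1}^{t_2}A(t)dt$, degree $\widetilde{D}=\frac{1}{t_2-t_1}\int_{t_1}^{t_2}D(t)dt$, and Laplacian $\widetilde{L}=\widetilde{D}-\widetilde{A}$. *)

(* Defs.v *)
From HB Require Import structures.
From mathcomp Require Import all_boot all_order all_algebra.
From mathcomp Require Import all_classical all_reals all_analysis.
Set Implicit Arguments. Unset Strict Implicit. Unset Printing Implicit Defensive.
Import Order.TTheory GRing.Theory Num.Theory.
Local Open Scope classical_set_scope.
Local Open Scope ring_scope.

Section Defs.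
Variables (R : realType) (n d : nat).

Definition weights := 'I_n -> 'I_n -> 'M[R]_d.

Definition psd (M : 'M[R]_d) : Prop := forall v : 'cV[R]_d, 0 <= (v^T *m M *m v) 0 0.
Definition nsd (M : 'M[R]_d) : Prop := forall v : 'cV[R]_d, (v^T *m M *m v) 0 0 <= 0.

Definition mabs (M : 'M[R]_d) : 'M[R]_d := if `[< psd M >] then M else - M.

(* index of the dn x dn matrix: p <-> (i, a), with p = i * d + a *)
Definition blk (p : 'I_(n * d)) : 'I_n * 'I_d :=
  enum_val (cast_ord (esym (mxvec_cast n d)) p).

Definition assemble (B : 'I_n -> 'I_n -> 'M[R]_d) : 'M[R]_(n * d) :=
  \matrix_(p, q) B (blk p).1 (blk q).1 (blk p).2 (blk q).2.

Definition degree (A : weights) (i : 'I_n) : 'M[R]_d := \sum_j mabs (A i j).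

Definition Dmat (A : weights) : 'M[R]_(n * d) :=
  assemble (fun i j => if i == j then degree A i else 0).
Definition Amat (A : weights) : 'M[R]_(n * d) := assemble A.
Definition laplacian (A : weights) : 'M[R]_(n * d) := Dmat A - Amat A.

Definition mx_avg m (M : R -> 'M[R]_m) (t1 t2 : R) : 'M[R]_m :=
  \matrix_(p, q) ((t2 - t1)^-1 *
     Rintegral (@lebesgue_measure R) `[t1, t2[ (fun s => M s p q)).

Definition integral_laplacian (A : R -> weights) (t1 t2 : R) : 'M[R]_(n * d) :=
  mx_avg (fun s => Dmat (A s)) t1 t2 - mx_avg (fun s => Amat (A s)) t1 t2.

Definition nullsp m (M : 'M[R]_m) : set 'cV[R]_m := [set x | M *m x = 0].

Definition matrix_weighted_network (A : R -> weights) : Prop :=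
  [/\ forall s i j, (A s i j)^T = A s i j,
      forall s i j, A s i j = A s j i,
      forall s i, A s i i = 0,
      forall s i j, psd (A s i j) \/ nsd (A s i j)
    & forall i j, (forall s, psd (A s i j)) \/ (forall s, nsd (A s i j))].

Definition assumption1 (A : R -> weights) (t : nat -> R) (alpha : R) : Prop :=
  [/\ t 0%N = 0,
      t @ \oo --> +oo,
      0 < alpha,
      forall k, alpha <= t k.+1 - t k
    & forall k s, t k <= s < t k.+1 -> A s = A (t k)].

End Defs.

(* Main.v *)
Require Import Defs.
From HB Require Import structures.
From mathcomp Require Import all_boot all_order all_algebra.
From mathcomp Require Import all_classical all_reals all_analysis.
From mathcomp Require Import ring lra zify.
Import Order.TTheory GRing.Theory Num.Theory.
Local Open Scope classical_set_scope.
Local Open Scope ring_scope.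

Section PC.
Context {R : realType}.
Notation mu := (@lebesgue_measure R).

Lemma itv_int_cst (a b c : R) (f : R -> R) : a <= b ->
  (forall s, a <= s < b -> f s = c) ->
  mu.-integrable `[a, b[ (EFin \o f) /\ \int[mu]_(x in `[a, b[) f x = (b - a) * c.
Proof.
move=> ab fc.
have eqf : {in `[a, b[%classic, (fun _ => c) =1 f}.
  by move=> s /set_mem /=; rewrite in_itv /= => /fc ->.
split.
  have mI : measurable (`[a, b[%classic : set R) by [].
  apply: (eq_integrable (mu:=mu) mI (EFin \o cst c)).
    by move=> s /eqf /= ->.
  apply: measurable_bounded_integrable => //.
  - have := lebesgue_measure_itv `[a, b[; move=> /= ->.
    by case: ifPn => _; rewrite ?ltry // -EFinD ltry.
  - exact: bounded_cst.
rewrite -(eq_Rintegral mu eqf) Rintegral_cst //.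
have := lebesgue_measure_itv `[a, b[; move=> /= ->; rewrite lte_fin.
case: ltP => [_|ba]; first by rewrite /= mulrC.
have -> : b = a by apply/le_anti; rewrite ab ba.
by rewrite subrr mul0r mulr0.
Qed.

Lemma integrable_setU2 (A B : set R) (f : R -> R) : measurable A -> measurable B ->
  [disjoint A & B] ->
  mu.-integrable A (EFin \o f) -> mu.-integrable B (EFin \o f) ->
  mu.-integrable (A `|` B) (EFin \o f).
Proof.
move=> mA mB dAB iA iB.
have mAB : measurable (A `|` B) by exact: measurableU.
apply/(integrable_mkcond (mu:=mu) (EFin \o f) mAB).
move/(integrable_mkcond (mu:=mu) (EFin \o f) mA): iA => iA.
move/(integrable_mkcond (mu:=mu) (EFin \o f) mB): iB => iB.
apply: (eq_integrable (mu:=mu) _ _ _ _ (integrableD _ iA iB)) => // x _.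
rewrite /= /patch /=.
rewrite in_setU.
case: (boolP (x \in A)) => xA; case: (boolP (x \in B)) => xB /=.
- by exfalso; move/disj_setPS: dAB => /(_ x) []; split; apply/set_mem.
- by rewrite adde0.
- by rewrite add0e.
- by rewrite adde0.
Qed.



Lemma pc_integral (t : nat -> R) (f : R -> R) (g : nat -> R) (k0 : nat) :
  (forall k, t k <= t k.+1) -> (forall k s, t k <= s < t k.+1 -> f s = g k) ->
  forall m, [/\ t k0 <= t (addn k0 m), mu.-integrable `[t k0, t (addn k0 m)[ (EFin \o f) &
   \int[mu]_(x in `[t k0, t (addn k0 m)[) f x = \sum_(k0 <= k < k0 + m) (t k.+1 - t k) * g k].
Proof.
move=> tinc fg; elim=> [|m [tm im IH]].
  rewrite addn0 big_geq // set_itv_ge ?bnd_simp ?ltxx //.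
  by split => //; [exact: integrable_set0 | exact: Rintegral_set0].
have tm1 := tinc (addn k0 m).
have [ic Ic] := @itv_int_cst _ _ _ _ tm1 (fg (addn k0 m)).
have E : `[t k0, t (addn k0 m.+1)[%classic = `[t k0, t (addn k0 m)[ `|` `[t (addn k0 m), t (k0 + m).+1[.
  by rewrite addnS; apply: itv_bndbnd_setU; rewrite bnd_simp.
have dj : [disjoint `[t k0, t (addn k0 m)[%classic & `[t (addn k0 m), t (k0 + m).+1[%classic].
  apply: lt_disjoint => x y; rewrite !in_itv /= => /andP[_ xm] /andP[my _].
  exact: lt_le_trans xm my.
have iU : mu.-integrable `[t k0, t (addn k0 m.+1)[ (EFin \o f).
  by rewrite E; apply: integrable_setU2.
split => //; first by rewrite addnS; exact: le_trans tm tm1.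
rewrite E Rintegral_setU // -?E // IH Ic addnS big_nat_recr //=.
exact: leq_addr.
Qed.

End PC.

Section Blk.
Context {R : realType} {n d : nat}.
Definition qf m (M : 'M[R]_m) (u v : 'cV[R]_m) := (u^T *m M *m v) 0 0.
Arguments qf {m}.

Definition blkinv (u : 'I_n * 'I_d) : 'I_(n * d) := cast_ord (mxvec_cast n d) (enum_rank u).
Lemma blkK : cancel blkinv (@blk n d).
Proof. by move=> u; rewrite /blk /blkinv cast_ordK enum_rankK. Qed.
Lemma blkKV : cancel (@blk n d) blkinv.
Proof. by move=> p; rewrite /blk /blkinv enum_valK cast_ordKV. Qed.

Definition xb (x : 'cV[R]_(n * d)) (i : 'I_n) : 'cV[R]_d := \col_a x (blkinv (i, a)) 0.

Lemma sum_pair (F : 'I_n * 'I_d -> R) : \sum_u F u = \sum_i \sum_a F (i, a).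
Proof. by rewrite pair_bigA; apply: eq_bigr => -[]. Qed.

Lemma qf_assemble B x y :
  qf (assemble B) x y = \sum_i \sum_j qf (B i j) (xb x i) (xb y j).
Proof.
pose G (u v : 'I_n * 'I_d) := x (blkinv u) 0 * B u.1 v.1 u.2 v.2 * y (blkinv v) 0.
have -> : qf (assemble B) x y = \sum_v \sum_u G u v.
  rewrite /qf mxE (reindex blkinv); last by exists (@blk n d) => u _; [exact: blkK | exact: blkKV].
  apply: eq_bigr => v _; rewrite mxE big_distrl /=.
  rewrite (reindex blkinv); last by exists (@blk n d) => u _; [exact: blkK | exact: blkKV].
  by apply: eq_bigr => u _; rewrite /G !mxE !blkK.
rewrite exchange_big /= sum_pair; apply: eq_bigr => i _.
rewrite (eq_bigr (fun a => \sum_j \sum_b G (i, a) (j, b))); last by move=> a _; rewrite sum_pair.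
rewrite exchange_big /=; apply: eq_bigr => j _.
rewrite /qf mxE exchange_big /=; apply: eq_bigr => b _.
rewrite mxE big_distrl /=; apply: eq_bigr => a _.
by rewrite /G /xb !mxE.
Qed.


Lemma qfDl m (M : 'M[R]_m) u v w : qf M (u + v) w = qf M u w + qf M v w.
Proof. by rewrite /qf linearD /= !mulmxDl !mxE. Qed.
Lemma qfDr m (M : 'M[R]_m) u v w : qf M w (u + v) = qf M w u + qf M w v.
Proof. by rewrite /qf mulmxDr !mxE. Qed.
Lemma qfNl m (M : 'M[R]_m) u w : qf M (- u) w = - qf M u w.
Proof. by rewrite /qf linearN /= !mulNmx !mxE. Qed.
Lemma qfNr m (M : 'M[R]_m) u w : qf M w (- u) = - qf M w u.
Proof. by rewrite /qf mulmxN !mxE. Qed.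
Lemma qfMB m (M N : 'M[R]_m) u w : qf (M - N) u w = qf M u w - qf N u w.
Proof. by rewrite /qf mulmxBr mulmxBl !mxE. Qed.
Lemma qfMN m (M : 'M[R]_m) u w : qf (- M) u w = - qf M u w.
Proof. by rewrite /qf mulmxN mulNmx !mxE. Qed.
Lemma qf0M m (u w : 'cV[R]_m) : qf 0 u w = 0.
Proof. by rewrite /qf mulmx0 mul0mx !mxE. Qed.
Lemma qfMsum m I (r : seq I) (P : pred I) (F : I -> 'M[R]_m) u w :
  qf (\sum_(i <- r | P i) F i) u w = \sum_(i <- r | P i) qf (F i) u w.
Proof.
elim/big_rec2: _ => [|i y1 y2 _ <-]; first exact: qf0M.
by rewrite /qf mulmxDr mulmxDl !mxE.
Qed.

Lemma qfZl m (M : 'M[R]_m) (c : R) u w : qf M (c *: u) w = c * qf M u w.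
Proof. by rewrite /qf linearZ /= -!scalemxAl !mxE. Qed.

Lemma qfZr m (M : 'M[R]_m) (c : R) u w : qf M w (c *: u) = c * qf M w u.
Proof. by rewrite /qf -scalemxAr !mxE. Qed.

Lemma qfMD m (M N : 'M[R]_m) u w : qf (M + N) u w = qf M u w + qf N u w.
Proof. by rewrite /qf mulmxDr mulmxDl !mxE. Qed.

Lemma qfMZ m (M : 'M[R]_m) c u w : qf (c *: M) u w = c * qf M u w.
Proof. by rewrite /qf -scalemxAr -scalemxAl !mxE. Qed.

Lemma qf_sym m (M : 'M[R]_m) u v : M^T = M -> qf M u v = qf M v u.
Proof.
move=> MT; rewrite /qf [LHS](_ : _ = ((u^T *m M *m v)^T) 0 0); last by rewrite [RHS]mxE.
by rewrite !trmx_mul trmxK MT mulmxA.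
Qed.

Lemma psd0 m (M : 'M[R]_m) x : M^T = M -> (forall y, 0 <= qf M y y) ->
  qf M x x = 0 -> M *m x = 0.
Proof.
move=> MT Mpsd qx.
set y := M *m x.
have xMy w : qf M x w = (y^T *m w) 0 0 by rewrite /qf /y trmx_mul MT.
set s := (y^T *m y) 0 0; set Q := qf M y y.
have qyx : qf M y x = s by rewrite qf_sym // xMy.
have H r : 0 <= 2 * r * s + r ^+ 2 * Q.
  have := Mpsd (x + r *: y).
  rewrite !(qfDl, qfDr, qfZl, qfZr) qx xMy qyx -/s -/Q.
  by move=> h; nra.
have sE : s = \sum_i y i 0 * y i 0.
  by rewrite /s mxE; apply: eq_bigr => i _; rewrite mxE.
have s0 : 0 <= s by rewrite sE; apply: sumr_ge0 => i _; rewrite -expr2 sqr_ge0.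
have Q0 : 0 <= Q := Mpsd y.
have s_eq0 : s = 0.
  set u := (Q + 1)^-1.
  have hu : u * (Q + 1) = 1 by rewrite /u mulVf // gt_eqF // ltr_pwDr.
  have u0 : 0 < u by rewrite /u invr_gt0 ltr_pwDr.
  have e : u * Q = 1 - u by lra.
  have := H (- s * u).
  have -> : 2 * (- s * u) * s + (- s * u) ^+ 2 * Q = - (s * s * u) - (s * s * u) * u.
    have -> : (- s * u) ^+ 2 * Q = s * s * u * (u * Q) by ring.
    rewrite e; ring.
  have p1 : 0 <= s * s * u * u.
    by rewrite (_ : s * s * u * u = (s * u) ^+ 2) ?sqr_ge0 //; ring.
  move=> h.
  have p2 : s * s * u <= 0 by lra.
  have p3 : s * s <= 0.
    by rewrite -(pmulr_lle0 _ u0).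
  apply/eqP; rewrite -[s == 0]orbb -mulf_eq0 eq_le p3 /= -expr2 sqr_ge0 //.
apply/matrixP => i j; rewrite (ord1 j) [RHS]mxE.
move: s_eq0; rewrite sE => /eqP; rewrite psumr_eq0 => [/allP /(_ i (mem_index_enum i)) /implyP|].
  by move=> /(_ isT) /eqP /eqP; rewrite mulf_eq0 orbb => /eqP.
by move=> k _; rewrite -expr2 sqr_ge0.
Qed.

Lemma qf_lap (A : weights R n d) x :
  qf (laplacian A) x x =
  \sum_i \sum_j (qf (mabs (A i j)) (xb x i) (xb x i) - qf (A i j) (xb x i) (xb x j)).
Proof.
rewrite /laplacian qfMB /Dmat /Amat !qf_assemble -sumrB; apply: eq_bigr => i _.
rewrite sumrB; congr (_ - _).
rewrite (bigD1 i) //= eqxx big1 ?addr0; last first.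
  by move=> j /negbTE; rewrite eq_sym => ->; exact: qf0M.
by rewrite /degree qfMsum.
Qed.

Lemma lap_psd (A : weights R n d) x :
  (forall i j, A i j = A j i) -> (forall i j, psd (A i j) \/ nsd (A i j)) ->
  0 <= qf (laplacian A) x x.
Proof.
move=> Asym Asgn; rewrite qf_lap.
pose T i j := qf (mabs (A i j)) (xb x i) (xb x i) - qf (A i j) (xb x i) (xb x j).
change (0 <= \sum_i \sum_j T i j).
set S := \sum_i \sum_j T i j.
have -> : S = (\sum_i \sum_j (T i j + T j i)) / 2.
  rewrite (eq_bigr (fun i => \sum_j T i j + \sum_j T j i)); last by move=> i _; rewrite big_split.
  rewrite big_split /= [X in _ + X]exchange_big /= -/S.
  by field.
apply: divr_ge0; last by [].
apply: sumr_ge0 => i _; apply: sumr_ge0 => j _.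
rewrite /T (Asym j i) /mabs.
set u := xb x i; set v := xb x j; set M := A i j.
case: (Asgn i j) => HM.
  rewrite asboolT //.
  have := HM (u - v); rewrite -/(qf M (u - v) (u - v)).
  rewrite !(qfDl, qfDr, qfNl, qfNr) => h; lra.
case: (boolP `[< psd M >]) => HP.
  have := (asboolW HP) (u - v); rewrite -/(qf M (u - v) (u - v)).
  rewrite !(qfDl, qfDr, qfNl, qfNr) => h; lra.
have := HM (u + v); rewrite -/(qf M (u + v) (u + v)).
rewrite !(qfMN, qfDl, qfDr, qfNl, qfNr) => h; lra.
Qed.


Lemma lap_sym (A : weights R n d) :
  (forall i j, (A i j)^T = A i j) -> (forall i j, A i j = A j i) ->
  (laplacian A)^T = laplacian A.
Proof.
move=> Atr Asym.
have Dsym i : (degree A i)^T = degree A i.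
  rewrite /degree raddf_sum; apply: eq_bigr => j _ /=.
  by rewrite /mabs; case: ifP => _; rewrite ?linearN /= Atr.
apply/matrixP => p q; rewrite /laplacian /Dmat /Amat /assemble !mxE.
congr (_ - _); last first.
  by rewrite (Asym (blk q).1) -[in LHS]Atr mxE.
rewrite eq_sym; case: eqP => [->|_]; last by rewrite !mxE.
by rewrite -[in LHS]Dsym mxE.
Qed.

End Blk.
Arguments qf {R m}.
Arguments psd0 {R m}.
Arguments lap_psd {R n d}.
Arguments lap_sym {R n d}.

Theorem lemma9 (R : realType) (n d : nat) (A : R -> weights R n d)
  (t : nat -> R) (alpha : R) (k' k'' : nat) :
  (1 < n)%N ->
  matrix_weighted_network A ->
  assumption1 A t alpha ->
  (k' < k'')%N ->
  nullsp (integral_laplacian A (t k') (t k'')) =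
  \bigcap_(i in [set i : nat | (1 <= i <= k'' - k')%N])
     nullsp (laplacian (A (t (k' + i - 1)%N))).
Proof.
move=> _ [Atr Asym Adiag Asgn _] [t0 tinf alpha0 talpha tconst] lt_k.
have tinc k : t k < t k.+1.
  have := talpha k; move: alpha0; lra.
have tmono : {homo t : i j / (i < j)%N >-> i < j} := homo_ltn lt_trans tinc.
have tle k : t k <= t k.+1 := ltW (tinc k).
set T := t k'' - t k'.
have Tpos : 0 < T by rewrite /T subr_gt0 tmono.
have ek : (k' + (k'' - k'))%N = k'' by rewrite subnKC // ltnW.
have KEY : integral_laplacian A (t k') (t k'') =
    \sum_(k' <= k < k'') ((t k.+1 - t k) / T) *: laplacian (A (t k)).
  apply/matrixP => p q.
  have [_ _ ID] := pc_integral t (fun s => Dmat (A s) p q) (fun k => Dmat (A (t k)) p q) k'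
     tle (fun k s hs => congr1 (fun B => Dmat B p q) (tconst k s hs)) (k'' - k').
  have [_ _ IA] := pc_integral t (fun s => Amat (A s) p q) (fun k => Amat (A (t k)) p q) k'
     tle (fun k s hs => congr1 (fun B => Amat B p q) (tconst k s hs)) (k'' - k').
  rewrite ek in ID IA.
  rewrite /integral_laplacian /mx_avg [LHS]mxE !mxE -/T ID IA summxE.
  rewrite !big_distrr -sumrB; apply: eq_bigr => k _.
  rewrite [RHS]mxE /laplacian.
  have -> : (Dmat (A (t k)) - Amat (A (t k))) p q = Dmat (A (t k)) p q - Amat (A (t k)) p q.
    by rewrite !mxE.
  rewrite /=.
  rewrite /T; field; exact: lt0r_neq0.
rewrite KEY; apply/seteqP; split => x /=.
- rewrite /nullsp /= => Sx i /= /andP[i1 i2].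
  set k := (k' + i - 1)%N.
  have kin : k \in index_iota k' k'' by rewrite mem_index_iota /k; apply/andP; split; lia.
  have q0 : qf (\sum_(k' <= k < k'') ((t k.+1 - t k) / T) *: laplacian (A (t k))) x x = 0.
    by rewrite /qf -mulmxA Sx mulmx0 mxE.
  rewrite qfMsum in q0.
  have pos j : 0 < (t j.+1 - t j) / T by rewrite divr_gt0 // subr_gt0.
  move: q0 => /eqP; rewrite psumr_eq0; last first.
    by move=> j _; rewrite qfMZ; apply: mulr_ge0; [exact: ltW | apply: lap_psd; [exact: Asym | exact: Asgn]].
  move=> /allP /(_ k kin) /= /eqP; rewrite qfMZ => /eqP; rewrite mulf_eq0 gt_eqF //= => /eqP qk.
  apply: psd0 => //; first by apply: lap_sym; [exact: Atr | exact: Asym].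
  by move=> y; apply: lap_psd; [exact: Asym | exact: Asgn].
- move=> H; rewrite /nullsp /= mulmx_suml big_nat big1 // => k /andP[k1 k2].
  have := H (k - k' + 1)%N; rewrite /nullsp /=.
  have -> : (k' + (k - k' + 1) - 1)%N = k by lia.
  have hk : (0 < k - k' + 1 <= k'' - k')%N by apply/andP; split; lia.
  by move=> /(_ hk) Lx; rewrite -scalemxAl Lx scaler0.
Qed.
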